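(* Let $n\ge 5$ be odd and let $G$ be the graph obtained from the cycle $C_n$ by adding one edge between two non-adjacent vertices of the cycle. Then $G$ is strongly EFX-orientable.
   Context: All graphs are finite and simple. For a graph $G=(V,E)$ and $v\in V$, $E(v)$ is the set of edges incident to $v$. A graphical instance on $G$ assigns to each vertex $v$ a valuation $f_v:2^E\to\mathbb{R}_{\ge 0}$ that is monotone ($A\subseteq B\Rightarrow f_v(A)\le f_v(B)$) and satisfies $f_v(X)=f_v(X\cap E(v))$ for all $X\subseteq E$. An orientation of $G$ chooses for each edge one of its endpoints as its head; vertex $v$ receives the bundle $X_v$ of edges whose head is $v$. The orientation is EFX if for all $u,v\in V$ and every $g\in X_v$, $f_u(X_u)\ge f_u(X_v\setminus\{g\})$. A graph $G$ is strongly EFX-orientable if for every graphical instance on $G$ there exists an EFX orientation. *)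

(* Defs.v *)
From HB Require Import structures.
From mathcomp Require Import all_boot all_order all_algebra.
From mathcomp Require Import reals.
Set Implicit Arguments. Unset Strict Implicit. Unset Printing Implicit Defensive.
Import Order.TTheory GRing.Theory Num.Theory.
Local Open Scope ring_scope.

Section Graphs.
Variable T : finType.
(* A simple graph on vertex set T is given by a symmetric irreflexive
   adjacency relation e; its edges are the 2-element sets {x,y} with e x y. *)
Variable e : rel T.

Definition is_edge (s : {set T}) : bool :=
  [exists x, exists y, [&& x != y, e x y & s == [set x; y]]].

Definition edge := { s : {set T} | is_edge s }.

Definition incident (v : T) : {set edge} := [set g : edge | v \in val g].

Variable R : realType.

Definition graphical_instance (f : T -> {set edge} -> R) : Prop :=
  forall v : T,
    (forall A : {set edge}, 0 <= f v A) /\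
    (forall A B : {set edge}, A \subset B -> f v A <= f v B) /\
    (forall X : {set edge}, f v X = f v (X :&: incident v)).

Definition orientation (h : edge -> T) : Prop := forall g : edge, h g \in val g.

Definition bundle (h : edge -> T) (v : T) : {set edge} := [set g | h g == v].

Definition EFX (f : T -> {set edge} -> R) (h : edge -> T) : Prop :=
  forall u v : T, forall g : edge, g \in bundle h v ->
    f u (bundle h v :\ g) <= f u (bundle h u).
End Graphs.

Definition strongly_EFX_orientable (T : finType) (e : rel T) : Prop :=
  forall (R : realType) (f : T -> {set edge e} -> R),
    graphical_instance f ->
    exists h : edge e -> T, orientation h /\ EFX f h.

Definition cycle_adj (n : nat) : rel 'I_n :=
  fun i j => ((val j == (val i).+1 %% n) || (val i == (val j).+1 %% n))%N.

Definition cycle_plus_chord (n : nat) (a b : 'I_n) : rel 'I_n :=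
  fun i j => cycle_adj i j || ((i == a) && (j == b)) || ((i == b) && (j == a)).

(* Main.v *)
Require Import Defs.
From HB Require Import structures.
From mathcomp Require Import all_boot all_order all_algebra.
From mathcomp Require Import reals.
From mathcomp Require Import zify.
Set Implicit Arguments. Unset Strict Implicit. Unset Printing Implicit Defensive.
Import Order.TTheory GRing.Theory Num.Theory.
Local Open Scope ring_scope.

Lemma edge_pair (T : finType) (e : rel T) (g : edge e) :
  exists x y, [/\ x != y, e x y & val g = [set x; y]].
Proof. by case: g => s /= /existsP [x /existsP [y /and3P [xy exy /eqP ->]]]; exists x, y. Qed.

Definition hd_of (T : finType) (e : rel T) (rule : T -> T -> bool) (x0 : T) (g : edge e) : T :=
  odflt x0 [pick y in val g | [exists x in val g, (x != y) && rule x y]].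

Lemma hd_spec (T : finType) (e : rel T) (rule : T -> T -> bool) (x0 : T) (g : edge e) x y :
  (forall x y, e x y -> rule x y = ~~ rule y x) ->
  x != y -> e x y -> val g = [set x; y] -> rule x y -> hd_of rule x0 g = y.
Proof.
move=> Hr xy exy vg rxy; rewrite /hd_of; case: pickP => [y' | no] /=.
  case/andP=> y'in /existsP [x' /andP [x'in /andP [x'y' r]]].
  move: y'in x'in; rewrite vg !inE => /orP [] /eqP yy /orP [] /eqP xx //; subst;
   try by rewrite eqxx in x'y'.
  by move: rxy; rewrite (Hr _ _ exy) r.
have := no y; rewrite vg !inE eqxx orbT /=.
by move/negbT/negP; case; apply/existsP; exists x; rewrite !inE eqxx xy rxy.
Qed.

Lemma hd_cases (T : finType) (e : rel T) (rule : T -> T -> bool) (x0 : T) (g : edge e) :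
  (forall x y, e x y -> rule x y = ~~ rule y x) ->
  (forall x y, e x y = e y x) ->
  exists x, [/\ x != hd_of rule x0 g, e x (hd_of rule x0 g), rule x (hd_of rule x0 g)
     & val g = [set x; hd_of rule x0 g]].
Proof.
move=> Hr Hs; have [x [y [xy exy vg]]] := edge_pair g.
case rxy: (rule x y).
  by rewrite (hd_spec x0 Hr xy exy vg rxy); exists x.
have ryx : rule y x by move: (Hr _ _ exy); rewrite rxy => /esym/negbFE.
have eyx : e y x by rewrite Hs.
have vg' : val g = [set y; x] by rewrite vg setUC.
have yx : y != x by rewrite eq_sym.
by rewrite (hd_spec x0 Hr yx eyx vg' ryx); exists y.
Qed.

Definition Ed (T : finType) (e : rel T) (dflt : edge e) (x y : T) : edge e :=
  insubd dflt [set x; y].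

Lemma val_Ed (T : finType) (e : rel T) (dflt : edge e) x y :
  x != y -> e x y -> val (Ed dflt x y) = [set x; y].
Proof.
move=> xy exy; rewrite /Ed val_insubd.
suff -> : is_edge e [set x; y] by [].
by apply/existsP; exists x; apply/existsP; exists y; rewrite xy exy eqxx.
Qed.

Lemma Ed_sym (T : finType) (e : rel T) (dflt : edge e) x y : Ed dflt x y = Ed dflt y x.
Proof. by rewrite /Ed setUC. Qed.

Lemma general (T : finType) (e : rel T) (R : realType) (f : T -> {set edge e} -> R)
  (rule : T -> T -> bool) (w : T) (dflt : edge e) :
  graphical_instance f ->
  (forall x y, e x y = e y x) -> (forall x, ~~ e x x) ->
  (forall x y, e x y -> rule x y = ~~ rule y x) ->
  (forall v x1 x2, v != w -> e x1 v -> e x2 v -> rule x1 v -> rule x2 v -> x1 = x2) ->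
  (forall u, e u w -> rule u w -> exists z, [/\ e z u, rule z u &
        f u [set Ed dflt u w] <= f u [set Ed dflt z u]]) ->
  exists h : edge e -> T, orientation h /\ EFX f h.
Proof.
move=> Hf Hs Hirr Hr Hu Hsup.
have neq x y : e x y -> x != y by apply: contraTneq => ->; apply: Hirr.
pose h : edge e -> T := @hd_of T e rule w.
exists h; split.
  move=> g; have [x [_ _ _ ->]] := hd_cases w g Hr Hs; by rewrite !inE eqxx orbT.
have inb g v : (g \in bundle h v) = (h g == v) by rewrite inE.
move=> u v g; rewrite inb => /eqP hg.
have [f0 [fm fl]] := Hf u.
have base A : f u set0 <= f u A by apply: fm; apply: sub0set.
case: (eqVneq v w) => [vw | vw]; last first.
  suff -> : bundle h v :\ g = set0 by [].
  apply/setP => g2; rewrite !(inb, inE); apply/negbTE; apply/negP => /andP [g2g /eqP hg2].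
  have [x1 [_ e1 r1 v1]] := hd_cases w g Hr Hs.
  have [x2 [_ e2 r2 v2]] := hd_cases w g2 Hr Hs.
  move: e1 r1 v1 e2 r2 v2; rewrite -/h hg hg2 => e1 r1 v1 e2 r2 v2.
  have := Hu _ _ _ vw e1 e2 r1 r2 => x12; subst x2.
  have g2e : g2 = g by apply: val_inj; rewrite v1 v2.
  by rewrite g2e eqxx in g2g.
rewrite {}vw in hg *.
case: (eqVneq u w) => [uw | uw].
  by subst u; apply: fm; apply/subsetP => x; rewrite inE => /andP [] _ ?.
rewrite fl.
set S := (bundle h w :\ g) :&: incident e u.
case: (set_0Vmem S) => [-> | [g' g'S]]; first by apply: base.
have : g' \in S by [].
rewrite !(inb, inE) => /andP [/andP [_ /eqP hg'] ug'].
have [x [_ ex rx vx]] := hd_cases w g' Hr Hs.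
move: ex rx vx; rewrite -/h hg' => ex rx vx.
have ux : u = x.
  by move: ug'; rewrite vx !inE => /orP [] /eqP // uw'; rewrite uw' eqxx in uw.
subst x.
have SS : S \subset [set g'].
  apply/subsetP => g2; rewrite !(inb, inE) => /andP [/andP [_ /eqP hg2] ug2].
  have [x2 [_ ex2 rx2 vx2]] := hd_cases w g2 Hr Hs.
  move: ex2 rx2 vx2; rewrite -/h hg2 => ex2 rx2 vx2.
  have ux2 : u = x2.
    by move: ug2; rewrite vx2 !inE => /orP [] /eqP // uw'; rewrite uw' eqxx in uw.
  subst x2; apply/eqP; apply: val_inj; by rewrite vx2 vx.
have g'E : g' = Ed dflt u w by apply: val_inj; rewrite vx val_Ed // neq.
have [z [ez rz pz]] := Hsup u ex rx.
have hz : h (Ed dflt z u) = u.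
  by apply: (hd_spec w Hr (neq _ _ ez) ez _ rz); rewrite val_Ed // neq.
apply: le_trans (fm _ _ SS) _; rewrite g'E; apply: le_trans pz _.
by apply: fm; apply/subsetP => g2; rewrite inE => /eqP ->; rewrite inb hz.
Qed.
Local Close Scope ring_scope.
Definition sc (n x y : nat) : bool := ((y == x.+1) && (x.+1 < n)) || ((y == 0) && (x.+1 == n)).
Definition chp (a b x y : nat) : bool := ((x == a) && (y == b)) || ((x == b) && (y == a)).
Definition enat n a b x y := [|| sc n x y, sc n y x | chp a b x y].
Definition fwd (s t i : nat) : bool :=
  ((s <= t) && (s <= i) && (i < t)) || ((t < s) && ((s <= i) || (i < t))).
Definition ruleG n a b (o : nat -> bool) x u v :=
  (chp a b u v && (v == x)) || (~~ chp a b u v && ((sc n u v && o u) || (sc n v u && ~~ o v))).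
Definition sN n x := if x.+1 < n then x.+1 else 0.
Definition pN n x := if x == 0 then n.-1 else x.-1.

Lemma modS n x y : x < n -> (y == x.+1 %% n) = sc n x y.
Proof.
move=> xn; case: (ltngtP x.+1 n) => h.
- rewrite modn_small // /sc; apply/idP/idP; lia.
- lia.
- rewrite h modnn /sc; apply/idP/idP; lia.
Qed.

Lemma adjE n (i j : 'I_n) : cycle_adj i j = sc n i j || sc n j i.
Proof. by rewrite /cycle_adj (modS _ (ltn_ord i)) (modS _ (ltn_ord j)). Qed.

Lemma eE n (a b i j : 'I_n) : cycle_plus_chord a b i j = enat n a b i j.
Proof. by rewrite /cycle_plus_chord adjE /enat /chp -!orbA. Qed.

Lemma sc_asym n x y : 3 <= n -> x < n -> sc n x y -> sc n y x = false.
Proof. rewrite /sc => *; apply/negbTE; lia. Qed.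
Lemma sc_fun n x y y' : sc n x y -> sc n x y' -> y = y'.
Proof. rewrite /sc => *; lia. Qed.
Lemma sc_inj n x x' y : x < n -> x' < n -> sc n x y -> sc n x' y -> x = x'.
Proof. rewrite /sc => *; lia. Qed.
Lemma sc_irr n x : (2 <= n) -> sc n x x = false.
Proof. rewrite /sc => *; apply/negbTE; lia. Qed.
Lemma chp_irr a b x : a != b -> chp a b x x = false.
Proof. rewrite /chp => *; apply/negbTE; lia. Qed.
Lemma chp_rule a b i j x : chp a b i j -> (x == a) || (x == b) -> a != b ->
  (j == x) || false = ~~ ((i == x) || false).
Proof. rewrite /chp !orbF => *; apply/idP/idP; lia. Qed.
Lemma enat_irr n a b i : 2 <= n -> a != b -> enat n a b i i = false.
Proof. by move=> *; rewrite /enat sc_irr ?chp_irr. Qed.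
Lemma chpC a b x y : chp a b x y = chp a b y x.
Proof. rewrite /chp; apply/idP/idP; lia. Qed.
Lemma chp_sc n a b x y : ~~ (sc n a b || sc n b a) -> sc n x y -> chp a b x y = false.
Proof. rewrite /chp /sc => *; apply/negbTE; lia. Qed.
Lemma chp_fun a b x x' v : a != b -> chp a b x v -> chp a b x' v -> x = x'.
Proof. rewrite /chp => *; lia. Qed.
Lemma sc_sN n x : x < n -> sc n x (sN n x).
Proof. rewrite /sc /sN; case: ifP => *; lia. Qed.
Lemma sc_pN n x : x < n -> sc n (pN n x) x.
Proof. rewrite /sc /pN; case: ifP => *; lia. Qed.
Lemma sN_lt n x : x < n -> sN n x < n.
Proof. rewrite /sN; case: ifP => *; lia. Qed.
Lemma pN_lt n x : x < n -> pN n x < n.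
Proof. rewrite /pN; case: ifP => *; lia. Qed.
Lemma sc_sNE n x y : x < n -> sc n x y -> y = sN n x.
Proof. move=> xn H; exact: sc_fun H (sc_sN xn). Qed.
Lemma sc_pNE n x y : x < n -> y < n -> sc n x y -> x = pN n y.
Proof. move=> xn yn H; exact: sc_inj xn (pN_lt yn) H (sc_pN yn). Qed.

Definition succO n (i : 'I_n) : 'I_n := insubd i (sN n i).
Definition predO n (i : 'I_n) : 'I_n := insubd i (pN n i).
Lemma val_succO n (i : 'I_n) : val (succO i) = sN n i.
Proof. by rewrite /succO val_insubd sN_lt. Qed.
Lemma val_predO n (i : 'I_n) : val (predO i) = pN n i.
Proof. by rewrite /predO val_insubd pN_lt. Qed.
Definition pa n (a b x : 'I_n) : 'I_n := if x == a then b else a.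

Lemma rule_cases n a b (o : nat -> bool) x u v : ruleG n a b o x u v ->
  [\/ chp a b u v /\ v = x, sc n u v /\ o u | sc n v u /\ ~~ o v].
Proof.
rewrite /ruleG => /orP [/andP [H /eqP E] | /andP [_ /orP [/andP [H1 H2] | /andP [H1 H2]]]].
- by apply: Or31.
- by apply: Or32.
- by apply: Or33.
Qed.

Lemma chp_pa n (a b x : 'I_n) : (x == a) || (x == b) -> chp a b (pa a b x) x.
Proof.
rewrite /pa; case: (eqVneq x a) => [-> | xa] /= hx.
  by rewrite /chp !eqxx orbT.
have xb' : nat_of_ord x == nat_of_ord b := hx.
by rewrite /chp eqxx xb'.
Qed.

Local Open Scope ring_scope.

Definition Pgood n (a b : 'I_n) (R : realType) (f : 'I_n -> {set edge (cycle_plus_chord a b)} -> R)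
  dflt (o : nat -> bool) (x w u : 'I_n) : Prop :=
  [\/ o (pN n u) /\ f u [set Ed dflt u w] <= f u [set Ed dflt (predO u) u],
      ~~ o u /\ f u [set Ed dflt u w] <= f u [set Ed dflt (succO u) u] |
      u = x /\ f u [set Ed dflt u w] <= f u [set Ed dflt (pa a b x) u]].

Lemma cyc_orient n (a b x w : 'I_n) (R : realType)
  (f : 'I_n -> {set edge (cycle_plus_chord a b)} -> R) dflt (o : nat -> bool) :
  (5 <= n)%N -> a != b -> ~~ cycle_adj a b -> (x == a) || (x == b) -> graphical_instance f ->
  (forall v : 'I_n, v != w -> ~~ (o (pN n v) && ~~ o v)) ->
  (x != w -> ~~ o (pN n x) && o x) ->
  (o (pN n w) -> Pgood f dflt o x w (predO w)) ->
  (~~ o w -> Pgood f dflt o x w (succO w)) ->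
  (x == w -> Pgood f dflt o x w (pa a b x)) ->
  exists h, orientation h /\ EFX f h.
Proof.
move=> H5 ab nab hx Hf U1 U2 S1 S2 S3.
have H3 : (3 <= n)%N by apply: leq_trans H5.
have nab' : ~~ (sc n a b || sc n b a) by rewrite -adjE.
have ab' : (nat_of_ord a != nat_of_ord b) := ab.
have hx' : (nat_of_ord x == nat_of_ord a) || (nat_of_ord x == nat_of_ord b) := hx.
apply: (@general _ _ _ f (fun u v => ruleG n a b o x u v) w dflt Hf).
- move=> i j; rewrite !eE /enat [chp _ _ j i]chpC; by case: (sc n i j); case: (sc n j i).
- by move=> i; rewrite eE enat_irr //; apply: leq_trans H5.
- move=> i j; rewrite eE /enat => /or3P [] H.
  + rewrite /ruleG (chp_sc nab' H) (chpC _ _ j i) (chp_sc nab' H) (sc_asym H3 (ltn_ord i) H) H /=.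
    by case: (o i); rewrite ?orbF.
  + rewrite /ruleG (chp_sc nab' H) (chpC _ _ i j) (chp_sc nab' H) (sc_asym H3 (ltn_ord j) H) H /=.
    by case: (o j); rewrite ?orbF.
  + by rewrite /ruleG H (chpC _ _ j i) H /= (chp_rule H hx' ab').
- move=> v x1 x2 vw _ _ R1 R2; apply: ord_inj.
  have v1 := ltn_ord v; have v1' := ltn_ord x1; have v2' := ltn_ord x2.
  have U1v := U1 v vw.
  case: (rule_cases R1) => [[C1 E1] | [C1 E1] | [C1 E1]];
  case: (rule_cases R2) => [[C2 E2] | [C2 E2] | [C2 E2]].
  + exact: chp_fun ab' C1 C2.
  + have xw : x != w by apply: contraNneq vw => <-; apply/eqP/val_inj.
    move: (U2 xw); rewrite -E1 -(sc_pNE v2' v1 C2) E2 //.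
  + have xw : x != w by apply: contraNneq vw => <-; apply/eqP/val_inj.
    move: (U2 xw); rewrite -E1; move/negbTE: E2 => ->; by rewrite andbF.
  + have xw : x != w by apply: contraNneq vw => <-; apply/eqP/val_inj.
    move: (U2 xw); rewrite -E2 -(sc_pNE v1' v1 C1) E1 //.
  + by rewrite (sc_pNE v1' v1 C1) (sc_pNE v2' v1 C2).
  + by move: U1v; rewrite -(sc_pNE v1' v1 C1) E1 E2.
  + have xw : x != w by apply: contraNneq vw => <-; apply/eqP/val_inj.
    move: (U2 xw); rewrite -E2; move/negbTE: E1 => ->; by rewrite andbF.
  + by move: U1v; rewrite -(sc_pNE v2' v1 C2) E2 E1.
  + by rewrite (sc_sNE v1 C1) (sc_sNE v1 C2).
- move=> u _ Ru.
  have un := ltn_ord u; have wn := ltn_ord w.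
  have PG : Pgood f dflt o x w u.
    case: (rule_cases Ru) => [[C E] | [C E] | [C E]].
    + have -> : u = pa a b x.
        apply: ord_inj; apply: (chp_fun ab' _ (chp_pa hx)); by rewrite -E.
      by apply: S3; apply/eqP; apply: ord_inj; rewrite E.
    + have -> : u = predO w by apply: ord_inj; rewrite val_predO; exact: sc_pNE un wn C.
      by apply: S1; rewrite -(sc_pNE un wn C).
    + have -> : u = succO w by apply: ord_inj; rewrite val_succO; exact: sc_sNE wn C.
      by apply: S2.
  case: PG => [[O P] | [O P] | [E P]].
  + exists (predO u); split => //.
    * by rewrite eE /enat val_predO sc_pN.
    * by rewrite /ruleG val_predO (chp_sc nab' (sc_pN un)) (sc_pN un) O.
  + exists (succO u); split => //.
    * by rewrite eE /enat val_succO sc_sN // orbT.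
    * by rewrite /ruleG val_succO chpC (chp_sc nab' (sc_sN un)) (sc_sN un) O /= orbT.
  + subst u; exists (pa a b x); split => //.
    * by rewrite eE /enat chp_pa // !orbT.
    * by rewrite /ruleG chp_pa // eqxx.
Qed.

Local Close Scope ring_scope.
Lemma fU1 n s t v : 3 <= n -> s < n -> t < n -> t != s -> v < n -> v != t -> ~~ (fwd s t (pN n v) && ~~ fwd s t v).
Proof. rewrite /pN /fwd; case: ifP => *; lia. Qed.
Lemma fU2 n s t : 3 <= n -> s < n -> t < n -> t != s -> ~~ fwd s t (pN n s) && fwd s t s.
Proof. rewrite /pN /fwd; case: ifP => *; lia. Qed.
Lemma fS1 n s t : 3 <= n -> s < n -> t < n -> t != s -> pN n t != s -> fwd s t (pN n (pN n t)).
Proof. rewrite /pN /fwd; case: ifP => *; case: ifP => *; lia. Qed.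
Lemma fS2 n s t : 3 <= n -> s < n -> t < n -> t != s -> sN n t != s -> ~~ fwd s t (sN n t).
Proof. rewrite /sN /fwd; case: ifP => *; lia. Qed.
Local Open Scope ring_scope.

Lemma Ed_pa n (a b s : 'I_n) (dflt : edge (cycle_plus_chord a b)) :
  (s == a) || (s == b) -> Ed dflt (pa a b s) s = Ed dflt a b.
Proof.
rewrite /pa; case: (eqVneq s a) => [-> | sa] /= hs; first by rewrite Ed_sym.
by rewrite (eqP hs).
Qed.

Lemma ST_works n (a b s t : 'I_n) (R : realType)
  (f : 'I_n -> {set edge (cycle_plus_chord a b)} -> R) dflt :
  (5 <= n)%N -> a != b -> ~~ cycle_adj a b -> (s == a) || (s == b) -> t != s ->
  graphical_instance f ->
  (succO t != s -> f (succO t) [set Ed dflt (succO t) t] <=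
                   f (succO t) [set Ed dflt (succO (succO t)) (succO t)]) ->
  (succO t == s -> f s [set Ed dflt s t] <= f s [set Ed dflt a b]) ->
  (predO t != s -> f (predO t) [set Ed dflt (predO t) t] <=
                   f (predO t) [set Ed dflt (predO (predO t)) (predO t)]) ->
  (predO t == s -> f s [set Ed dflt s t] <= f s [set Ed dflt a b]) ->
  exists h, orientation h /\ EFX f h.
Proof.
move=> H5 ab nab hs ts Hf H1 H1' H2 H2'.
have H3 : (3 <= n)%N by apply: leq_trans H5.
have sn := ltn_ord s; have tn := ltn_ord t.
have ts' : nat_of_ord t != nat_of_ord s := ts.
apply: (@cyc_orient n a b s t R f dflt (fwd s t) H5 ab nab hs Hf).
- move=> v vt; exact: fU1 H3 sn tn ts' (ltn_ord v) vt.
- move=> _; exact: fU2 H3 sn tn ts'.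
- move=> _; case: (eqVneq (predO t) s) => [E | E].
  + apply: Or33; split; first exact: E; rewrite E (Ed_pa dflt hs); exact: H2' (introT eqP E).
  + apply: Or31; split; last exact: H2.
    rewrite val_predO; apply: fS1 => //.
    by move: E; apply: contraNneq => E; apply/eqP/ord_inj; rewrite val_predO.
- move=> _; case: (eqVneq (succO t) s) => [E | E].
  + apply: Or33; split; first exact: E; rewrite E (Ed_pa dflt hs); exact: H1' (introT eqP E).
  + apply: Or32; split; last exact: H1.
    rewrite val_succO; apply: fS2 => //.
    by move: E; apply: contraNneq => E; apply/eqP/ord_inj; rewrite val_succO.
- by rewrite eq_sym (negbTE ts).
Qed.

Definition nxt n (fw : bool) (i : 'I_n) : 'I_n := if fw then succO i else predO i.

Lemma Rot_works n (a b x : 'I_n) (R : realType)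
  (f : 'I_n -> {set edge (cycle_plus_chord a b)} -> R) dflt (fw : bool) :
  (5 <= n)%N -> a != b -> ~~ cycle_adj a b -> (x == a) || (x == b) ->
  graphical_instance f ->
  f (nxt fw x) [set Ed dflt (nxt fw x) x] <= f (nxt fw x) [set Ed dflt (nxt fw (nxt fw x)) (nxt fw x)] ->
  f (pa a b x) [set Ed dflt a b] <= f (pa a b x) [set Ed dflt (nxt fw (pa a b x)) (pa a b x)] ->
  exists h, orientation h /\ EFX f h.
Proof.
move=> H5 ab nab hx Hf; rewrite /nxt; case: fw => H1 H2.
- apply: (@cyc_orient n a b x x R f dflt (fun _ => false) H5 ab nab hx Hf) => //.
  + by rewrite eqxx.
  + by move=> _; apply: Or32.
  + by move=> _; rewrite /Pgood (Ed_pa dflt hx); apply: Or32.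
- apply: (@cyc_orient n a b x x R f dflt (fun _ => true) H5 ab nab hx Hf) => //.
  + by rewrite eqxx.
  + by move=> _; apply: Or31.
  + by move=> _; rewrite /Pgood (Ed_pa dflt hx); apply: Or31.
Qed.

Local Close Scope ring_scope.

Ltac ifs := repeat match goal with
  | |- context [if ?c then _ else _] => let H := fresh "Hif" in destruct c eqn:H
  | H0 : context [if ?c then _ else _] |- _ => let H := fresh "Hif" in destruct c eqn:H
  end.

Lemma val_insubd_lt n (j : 'I_n) k : k < n -> val (insubd j k) = k.
Proof. by move=> kn; rewrite val_insubd kn. Qed.
Lemma ord_insubd_lt n (j : 'I_n) k : k < n -> nat_of_ord (insubd j k) = k.
Proof. exact: val_insubd_lt. Qed.

Lemma odd_cyc n (d : 'I_n -> bool) : 3 <= n -> odd n ->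
  (forall t, ~~ d (predO t) -> ~~ d (succO t)) -> (forall t, d t) \/ (forall t, ~~ d t).
Proof.
move=> H3 Hodd H.
case: (boolP [forall t, d t]) => [/forallP A | /forallPn [j dj]]; [by left | right].
have n2 : n %% 2 = 1 by rewrite modn2 Hodd.
pose P k := d (insubd j k).
have step i : i.+2 < n -> ~~ P i -> ~~ P i.+2.
  move=> iH; rewrite /P; pose t : 'I_n := insubd j i.+1.
  have -> : insubd j i = predO t.
    apply: val_inj; rewrite val_predO /t (val_insubd_lt j (k:=i)) ?(ord_insubd_lt j (k:=i.+1)) /pN;
    ifs; lia.
  have -> : insubd j i.+2 = succO t.
    apply: val_inj; rewrite val_succO /t (val_insubd_lt j (k:=i.+2)) ?(ord_insubd_lt j (k:=i.+1)) /sN;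
    ifs; lia.
  exact: H.
have w1 : ~~ P (n - 2) -> ~~ P 0.
  rewrite /P; pose t : 'I_n := insubd j (n - 1).
  have -> : insubd j (n - 2) = predO t.
    apply: val_inj; rewrite val_predO /t (val_insubd_lt j (k:=n - 2)) ?(ord_insubd_lt j (k:=n - 1)) /pN;
    ifs; lia.
  have -> : insubd j 0 = succO t.
    apply: val_inj; rewrite val_succO /t (val_insubd_lt j (k:=0)) ?(ord_insubd_lt j (k:=n - 1)) /sN;
    ifs; lia.
  exact: H.
have w2 : ~~ P (n - 1) -> ~~ P 1.
  rewrite /P; pose t : 'I_n := insubd j 0.
  have -> : insubd j (n - 1) = predO t.
    apply: val_inj; rewrite val_predO /t (val_insubd_lt j (k:=n - 1)) ?(ord_insubd_lt j (k:=0)) /pN;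
    ifs; lia.
  have -> : insubd j 1 = succO t.
    apply: val_inj; rewrite val_succO /t (val_insubd_lt j (k:=1)) ?(ord_insubd_lt j (k:=0)) /sN;
    ifs; lia.
  exact: H.
have it m i : i + 2 * m < n -> ~~ P i -> ~~ P (i + 2 * m).
  elim: m => [|m IH] Hm Pi; first by rewrite muln0 addn0.
  have -> : i + 2 * m.+1 = (i + 2 * m).+2 by lia.
  apply: step; first lia.
  apply: IH => //; lia.
have reach i k : i <= k -> k < n -> (k - i) %% 2 = 0 -> ~~ P i -> ~~ P k.
  move=> ik kn km Pi.
  have -> : k = i + 2 * ((k - i) %/ 2) by lia.
  apply: it => //; lia.
have jn := ltn_ord j.
have Pj : ~~ P j by rewrite /P (_ : insubd j j = j) //; apply: val_inj; rewrite val_insubd_lt.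
have [P0 P1] : ~~ P 0 /\ ~~ P 1.
  case: (boolP (j %% 2 == 0)) => jm.
    have P1 : ~~ P 1 by apply: w2; apply: (reach j) => //; lia.
    split => //; apply: w1; apply: (reach 1) => //; lia.
  have P0 : ~~ P 0 by apply: w1; apply: (reach j) => //; lia.
  split => //; apply: w2; apply: (reach 0) => //; lia.
move=> k; have kn := ltn_ord k.
have -> : k = insubd j k by apply: val_inj; rewrite val_insubd_lt.
case: (boolP (k %% 2 == 0)) => km.
  by apply: (reach 0) => //; lia.
by apply: (reach 1) => //; lia.
Qed.

Lemma pair_nat n a b t : 5 <= n -> a < n -> b < n -> t < n -> a != b ->
  ~~ (sc n a b || sc n b a) -> ~~ ((a != pN n t) && (a != t) && (a != sN n t)) ->
  ~~ ((b != pN n t) && (b != t) && (b != sN n t)) ->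
  (a == pN n t) && (b == sN n t) || (a == sN n t) && (b == pN n t).
Proof. rewrite /pN /sN /sc => *; ifs; lia. Qed.

Lemma sp n (t : 'I_n) : succO (predO t) = t.
Proof. apply: ord_inj; rewrite val_succO val_predO /sN /pN; have := ltn_ord t; ifs; lia. Qed.
Lemma ps n (t : 'I_n) : predO (succO t) = t.
Proof. apply: ord_inj; rewrite val_predO val_succO /sN /pN; have := ltn_ord t; ifs; lia. Qed.
Lemma sO_neq n (t : 'I_n) : 3 <= n -> succO t != t.
Proof. move=> ?; apply/eqP => /(congr1 (@nat_of_ord n)); rewrite val_succO /sN; have := ltn_ord t; ifs; lia. Qed.
Lemma pO_neq n (t : 'I_n) : 3 <= n -> predO t != t.
Proof. move=> ?; apply/eqP => /(congr1 (@nat_of_ord n)); rewrite val_predO /pN; have := ltn_ord t; ifs; lia. Qed.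
Lemma sp_neq n (t : 'I_n) : 3 <= n -> succO t != predO t.
Proof. move=> ?; apply/eqP => /(congr1 (@nat_of_ord n)); rewrite val_predO val_succO /pN /sN; have := ltn_ord t; ifs; lia. Qed.
Lemma ssO_neq n (t : 'I_n) : 3 <= n -> succO (succO t) != t.
Proof. move=> ?; apply/eqP => /(congr1 (@nat_of_ord n)); rewrite !val_succO /sN; have := ltn_ord t; ifs; lia. Qed.
Lemma pa_a n (a b : 'I_n) : pa a b a = b.
Proof. by rewrite /pa eqxx. Qed.
Lemma pa_b n (a b : 'I_n) : a != b -> pa a b b = a.
Proof. by rewrite /pa eq_sym => /negbTE ->. Qed.

Local Open Scope ring_scope.

Lemma caseA_pair n (a b t : 'I_n) (R : realType)
  (f : 'I_n -> {set edge (cycle_plus_chord a b)} -> R) dflt :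
  (5 <= n)%N -> a != b -> ~~ cycle_adj a b -> graphical_instance f ->
  (predO t == a) || (predO t == b) -> (succO t == a) || (succO t == b) ->
  pa a b (predO t) = succO t -> pa a b (succO t) = predO t ->
  f (predO t) [set Ed dflt (predO t) t] < f (predO t) [set Ed dflt (predO (predO t)) (predO t)] ->
  f (succO t) [set Ed dflt t (succO t)] <= f (succO t) [set Ed dflt (succO t) (succO (succO t))] ->
  exists h, orientation h /\ EFX f h.
Proof.
move=> H5 ab nab Hf hx hy pxy pyx dp ds.
have H3 : (3 <= n)%N by apply: leq_trans H5.
case: (boolP (f (predO t) [set Ed dflt (predO t) t] <= f (predO t) [set Ed dflt a b])) => hx1.
  have tx : t != predO t by rewrite eq_sym pO_neq.
  apply: (ST_works (dflt:=dflt) H5 ab nab hx tx Hf).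
  - by move=> _; rewrite (Ed_sym dflt (succO t)) (Ed_sym dflt (succO (succO t))).
  - by move=> _.
  - by move=> H; exfalso; move: H; rewrite eqxx.
  - by move=> _.
case: (boolP (f (succO t) [set Ed dflt (succO t) t] <= f (succO t) [set Ed dflt a b])) => hy1.
  have ty : t != succO t by rewrite eq_sym sO_neq.
  apply: (ST_works (dflt:=dflt) H5 ab nab hy ty Hf).
  - by move=> H; exfalso; move: H; rewrite eqxx.
  - by move=> _.
  - by move=> _; apply: ltW.
  - by move=> _.
rewrite -ltNge in hx1; rewrite -ltNge in hy1.
case: (boolP (f t [set Ed dflt (predO t) t] <= f t [set Ed dflt t (succO t)])) => dt.
  apply: (Rot_works (dflt:=dflt) (fw := true) H5 ab nab hx Hf); rewrite /nxt ?sp.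
  - by rewrite (Ed_sym dflt t) (Ed_sym dflt (succO t)).
  - rewrite pxy (Ed_sym dflt (succO (succO t))); rewrite (Ed_sym dflt (succO t) t) in hy1.
    exact: (le_trans (ltW hy1) ds).
rewrite -ltNge in dt.
apply: (Rot_works (dflt:=dflt) (fw := false) H5 ab nab hy Hf); rewrite /nxt ?ps.
- exact: ltW dt.
- rewrite pyx; exact: ltW (lt_trans hx1 dp).
Qed.
Local Close Scope ring_scope.

Theorem mainTheorem8 (n : nat) (a b : 'I_n) :
  5 <= n -> odd n -> a != b -> ~~ cycle_adj a b ->
  strongly_EFX_orientable (cycle_plus_chord a b).
Proof.
move=> H5 Hodd ab nab R f Hf.
have H3 : (3 <= n)%N by apply: leq_trans H5.
have eab : is_edge (cycle_plus_chord a b) [set a; b].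
  apply/existsP; exists a; apply/existsP; exists b.
  by rewrite ab eE /enat /chp !eqxx /= !orbT.
pose dflt : edge (cycle_plus_chord a b) := exist _ [set a; b] eab.
pose d (y : 'I_n) := (f y [set Ed dflt (predO y) y] <= f y [set Ed dflt y (succO y)])%R.
have hA : (a == a) || (a == b) by rewrite eqxx.
have hB : (b == a) || (b == b) by rewrite eqxx orbT.
have ab' : nat_of_ord a != nat_of_ord b := ab.
have nab' : ~~ (sc n a b || sc n b a) by rewrite -adjE.
case: (boolP [exists t, ~~ d (predO t) && d (succO t)]) => [/existsP [t /andP [dp ds]] | none].
  move: dp ds; rewrite /d sp ps -ltNge => dp ds.
  case Ha: ((a != predO t) && (a != t) && (a != succO t)).
    move/andP: Ha => [/andP [a1 a2] a3].
    apply: (ST_works (dflt:=dflt) H5 ab nab hA (_ : t != a) Hf).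
    - by rewrite eq_sym.
    - move=> _; rewrite (Ed_sym dflt (succO t) t) (Ed_sym dflt (succO (succO t))); exact: ds.
    - move=> /eqP E; exfalso; move: a3; by rewrite E eqxx.
    - move=> _; exact: ltW dp.
    - move=> /eqP E; exfalso; move: a1; by rewrite E eqxx.
  case Hb: ((b != predO t) && (b != t) && (b != succO t)).
    move/andP: Hb => [/andP [b1 b2] b3].
    apply: (ST_works (dflt:=dflt) H5 ab nab hB (_ : t != b) Hf).
    - by rewrite eq_sym.
    - move=> _; rewrite (Ed_sym dflt (succO t) t) (Ed_sym dflt (succO (succO t))); exact: ds.
    - move=> /eqP E; exfalso; move: b3; by rewrite E eqxx.
    - move=> _; exact: ltW dp.
    - move=> /eqP E; exfalso; move: b1; by rewrite E eqxx.
  have Ha' : ~~ ((nat_of_ord a != pN n t) && (nat_of_ord a != nat_of_ord t) && (nat_of_ord a != sN n t)).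
    by rewrite -val_predO -val_succO; apply/negbT; exact: Ha.
  have Hb' : ~~ ((nat_of_ord b != pN n t) && (nat_of_ord b != nat_of_ord t) && (nat_of_ord b != sN n t)).
    by rewrite -val_predO -val_succO; apply/negbT; exact: Hb.
  have := pair_nat H5 (ltn_ord a) (ltn_ord b) (ltn_ord t) ab' nab' Ha' Hb'.
  case/orP => /andP [/eqP ea /eqP eb].
    have ea' : a = predO t by apply: ord_inj; rewrite val_predO.
    have eb' : b = succO t by apply: ord_inj; rewrite val_succO.
    apply: (caseA_pair (dflt:=dflt) H5 ab nab Hf _ _ _ _ dp ds).
    - by rewrite -ea' eqxx.
    - by rewrite -eb' eqxx orbT.
    - by rewrite -ea' pa_a.
    - by rewrite -eb' pa_b // ea'.
  have ea' : a = succO t by apply: ord_inj; rewrite val_succO.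
  have eb' : b = predO t by apply: ord_inj; rewrite val_predO.
  apply: (caseA_pair (dflt:=dflt) H5 ab nab Hf _ _ _ _ dp ds).
  - by rewrite -eb' eqxx orbT.
  - by rewrite -ea' eqxx.
  - by rewrite -eb' pa_b // ea'.
  - by rewrite -ea' pa_a.
have H : forall t, ~~ d (predO t) -> ~~ d (succO t).
  move=> t dp; apply/negP => ds; move/negP: none; apply; apply/existsP; exists t.
  by rewrite dp ds.
case: (odd_cyc H3 Hodd H) => [allT | allF].
  case: (boolP (f b [set Ed dflt a b] <= f b [set Ed dflt b (succO b)])%R) => hb.
    apply: (Rot_works (dflt:=dflt) (fw := true) H5 ab nab hA Hf); rewrite /nxt ?pa_a.
    - have := allT (succO a); rewrite /d ps => D.
      rewrite (Ed_sym dflt (succO a) a) (Ed_sym dflt (succO (succO a))); exact: D.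
    - rewrite (Ed_sym dflt (succO b)); exact: hb.
  rewrite -ltNge in hb.
  apply: (ST_works (dflt:=dflt) H5 ab nab hB (sO_neq b H3) Hf).
  - move=> _; have := allT (succO (succO b)); rewrite /d ps => D.
    rewrite (Ed_sym dflt (succO (succO b)) (succO b)) (Ed_sym dflt (succO (succO (succO b)))).
    exact: D.
  - move=> _; exact: ltW hb.
  - move=> Hc; exfalso; move: Hc; by rewrite ps eqxx.
  - move=> _; exact: ltW hb.
case: (boolP (f b [set Ed dflt a b] <= f b [set Ed dflt (predO b) b])%R) => hb.
  apply: (Rot_works (dflt:=dflt) (fw := false) H5 ab nab hA Hf); rewrite /nxt ?pa_a.
  - have := allF (predO a); rewrite /d sp -ltNge => D; exact: ltW D.
  - exact: hb.
rewrite -ltNge in hb.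
apply: (ST_works (dflt:=dflt) H5 ab nab hB (pO_neq b H3) Hf).
- move=> Hc; exfalso; move: Hc; by rewrite sp eqxx.
- move=> _; rewrite (Ed_sym dflt b); exact: ltW hb.
- move=> _; have := allF (predO (predO b)); rewrite /d sp -ltNge => D; exact: ltW D.
- move=> _; rewrite (Ed_sym dflt b); exact: ltW hb.
Qed.
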